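(* Let $I\subseteq\mathbb{R}$ be an interval and let $f,g: I\to\mathbb{R}$ be twice continuously differentiable with $g''(t)>0$ for all $t\in I$. For $n\ge 2$, positive weights $p_1,\dots,p_n$ with $\sum_{i=1}^n p_i=1$, and points $x_1,\dots,x_n\in I$ not all equal, put $$\Lambda_{f,g}(p,x)=\frac{\sum_{i=1}^n p_i f(x_i)-f\left(\sum_{i=1}^n p_i x_i\right)}{\sum_{i=1}^n p_i g(x_i)-g\left(\sum_{i=1}^n p_i x_i\right)}.$$ Then the inequality $\min\{x_1,\dots,x_n\}\le \Lambda_{f,g}(p,x)\le \max\{x_1,\dots,x_n\}$ holds for every $n\ge 2$, every such positive weight sequence $p$ and every such $x_1,\dots,x_n\in I$ (not all equal) if and only if $f''(t)=t\,g''(t)$ for every $t\in I$.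
   Context: Since $g''>0$, $g$ is strictly convex on $I$, so the denominator (a Jensen functional of $g$) is strictly positive when the $x_i$ are not all equal. *)

(* Defs.v *)
From Stdlib Require Import Reals Lra.
Open Scope R_scope.

Definition is_interval (I : R -> Prop) : Prop :=
  forall a b c, I a -> I b -> a <= c -> c <= b -> I c.

(* Derivative of f at x relative to I (one-sided at endpoints of I). *)
Definition deriv_within (I : R -> Prop) (f : R -> R) (x l : R) : Prop :=
  forall eps, 0 < eps -> exists delta, 0 < delta /\
    forall y, I y -> y <> x -> Rabs (y - x) < delta ->
      Rabs ((f y - f x) / (y - x) - l) < eps.

Definition cont_within (I : R -> Prop) (f : R -> R) (x : R) : Prop :=
  forall eps, 0 < eps -> exists delta, 0 < delta /\
    forall y, I y -> Rabs (y - x) < delta -> Rabs (f y - f x) < eps.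

Definition C2_on (I : R -> Prop) (f f1 f2 : R -> R) : Prop :=
  forall t, I t ->
    deriv_within I f t (f1 t) /\ deriv_within I f1 t (f2 t) /\ cont_within I f2 t.

Fixpoint sumR (n : nat) (a : nat -> R) : R :=
  match n with
  | O => 0
  | S k => sumR k a + a k
  end.

Fixpoint max_aux (k : nat) (a : nat -> R) : R :=
  match k with
  | O => a O
  | S j => Rmax (max_aux j a) (a (S j))
  end.
Fixpoint min_aux (k : nat) (a : nat -> R) : R :=
  match k with
  | O => a O
  | S j => Rmin (min_aux j a) (a (S j))
  end.

(* max / min of x_0, ..., x_{n-1} (used for n >= 1) *)
Definition maxR (n : nat) (x : nat -> R) : R := max_aux (n - 1) x.
Definition minR (n : nat) (x : nat -> R) : R := min_aux (n - 1) x.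

Definition jensen (h : R -> R) (n : nat) (p x : nat -> R) : R :=
  sumR n (fun i => p i * h (x i)) - h (sumR n (fun i => p i * x i)).

Definition Lambda (f g : R -> R) (n : nat) (p x : nat -> R) : R :=
  jensen f n p x / jensen g n p x.

(* Main.v *)
Require Import Defs.
From Stdlib Require Import Reals Lra Lia FunctionalExtensionality.
From Stdlib Require Import Reals.
Open Scope R_scope.

Lemma deriv_cont I f x l : deriv_within I f x l -> cont_within I f x.
Proof.
  intros H eps Heps.
  destruct (H 1 Rlt_0_1) as [d [Hd Hy]].
  exists (Rmin d (eps / (Rabs l + 1))); split.
  { apply Rmin_pos; auto. apply Rdiv_lt_0_compat; auto. pose proof (Rabs_pos l); lra. }
  intros y Iy Hyx.
  destruct (Req_dec y x) as [->|Hne].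
  { rewrite Rminus_diag, Rabs_R0; lra. }
  assert (Hq := Hy y Iy Hne (Rlt_le_trans _ _ _ Hyx (Rmin_l _ _))).
  assert (Hyx2 := Rlt_le_trans _ _ _ Hyx (Rmin_r _ _)).
  assert (Hyx0 : y - x <> 0) by lra.
  replace (f y - f x) with (((f y - f x) / (y - x) - l + l) * (y - x)) by (field; auto).
  rewrite Rabs_mult.
  assert (Habs: Rabs ((f y - f x) / (y - x) - l + l) <= Rabs l + 1).
  { eapply Rle_trans. apply Rabs_triang. lra. }
  assert (Hpos : 0 < Rabs l + 1) by (pose proof (Rabs_pos l); lra).
  apply Rle_lt_trans with ((Rabs l + 1) * Rabs (y - x)).
  { apply Rmult_le_compat_r; auto. apply Rabs_pos. }
  apply Rlt_le_trans with ((Rabs l + 1) * (eps / (Rabs l + 1))).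
  { apply Rmult_lt_compat_l; auto. }
  right; field; lra.
Qed.

Lemma deriv_comb I u v x lu lv al be :
  deriv_within I u x lu -> deriv_within I v x lv ->
  deriv_within I (fun y => al * u y + be * v y) x (al * lu + be * lv).
Proof.
  intros Hu Hv eps Heps.
  set (K := Rabs al + Rabs be + 1).
  assert (HK : 0 < K) by (unfold K; pose proof (Rabs_pos al); pose proof (Rabs_pos be); lra).
  destruct (Hu (eps / K)) as [d1 [Hd1 H1]]. { apply Rdiv_lt_0_compat; lra. }
  destruct (Hv (eps / K)) as [d2 [Hd2 H2]]. { apply Rdiv_lt_0_compat; lra. }
  exists (Rmin d1 d2); split. { apply Rmin_pos; auto. }
  intros y Iy Hne Hyx.
  specialize (H1 y Iy Hne (Rlt_le_trans _ _ _ Hyx (Rmin_l _ _))).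
  specialize (H2 y Iy Hne (Rlt_le_trans _ _ _ Hyx (Rmin_r _ _))).
  assert (Hyx0 : y - x <> 0) by lra.
  replace ((al * u y + be * v y - (al * u x + be * v x)) / (y - x) - (al * lu + be * lv))
    with (al * ((u y - u x) / (y - x) - lu) + be * ((v y - v x) / (y - x) - lv)) by (field; auto).
  eapply Rle_lt_trans. apply Rabs_triang. rewrite !Rabs_mult.
  assert (A1 : Rabs al * Rabs ((u y - u x) / (y - x) - lu) <= Rabs al * (eps / K))
    by (apply Rmult_le_compat_l; [apply Rabs_pos | lra]).
  assert (A2 : Rabs be * Rabs ((v y - v x) / (y - x) - lv) <= Rabs be * (eps / K))
    by (apply Rmult_le_compat_l; [apply Rabs_pos | lra]).
  assert (E : Rabs al * (eps / K) + Rabs be * (eps / K) < eps).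
  { replace (Rabs al * (eps / K) + Rabs be * (eps / K)) with (eps * ((K - 1) / K)) by (unfold K; field; pose proof (Rabs_pos al); pose proof (Rabs_pos be); lra).
    assert ((K-1)/K < 1). { apply (Rmult_lt_reg_r K); auto. unfold Rdiv. rewrite Rmult_assoc, Rinv_l by lra. lra. }
    rewrite <- (Rmult_1_r eps) at 2. apply Rmult_lt_compat_l; auto. }
  lra.
Qed.

Definition clamp a b x := Rmax a (Rmin b x).

Lemma clamp_in a b x : a <= b -> a <= clamp a b x <= b.
Proof. intros; unfold clamp, Rmax, Rmin; repeat destruct Rle_dec; lra. Qed.
Lemma clamp_id a b x : a <= x <= b -> clamp a b x = x.
Proof. intros; unfold clamp, Rmax, Rmin; repeat destruct Rle_dec; lra. Qed.
Lemma clamp_lip a b x c : a <= c <= b -> Rabs (clamp a b x - c) <= Rabs (x - c).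
Proof. intros; unfold clamp, Rmax, Rmin; repeat destruct Rle_dec;
  unfold Rabs; repeat destruct Rcase_abs; lra. Qed.

Lemma MVT_I I phi phi1 a b :
  is_interval I -> I a -> I b -> a < b ->
  (forall t, a <= t <= b -> deriv_within I phi t (phi1 t)) ->
  exists xi, a < xi < b /\ phi b - phi a = phi1 xi * (b - a).
Proof.
  intros HI Ia Ib Hab Hd.
  set (H := fun x => phi (clamp a b x)).
  assert (Hlim : forall c, a < c < b -> derivable_pt_lim H c (phi1 c)).
  { intros c Hc eps Heps.
    destruct (Hd c ltac:(lra) eps Heps) as [d [Hdp Hy]].
    assert (Hm : 0 < Rmin d (Rmin (c - a) (b - c))) by (repeat apply Rmin_pos; lra).
    exists (mkposreal _ Hm). intros h0 Hh0 Hh. simpl in Hh.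
    assert (h1 := Rmin_l d (Rmin (c - a) (b - c))).
    assert (h2 := Rmin_r d (Rmin (c - a) (b - c))).
    assert (h3 := Rmin_l (c - a) (b - c)). assert (h4 := Rmin_r (c - a) (b - c)).
    assert (Hab2 : - h0 < Rabs h0 /\ h0 <= Rabs h0 \/ h0 < Rabs h0 /\ -h0 <= Rabs h0).
    { unfold Rabs; destruct Rcase_abs; lra. }
    unfold H. rewrite (clamp_id a b c) by lra. rewrite (clamp_id a b (c + h0)).
    2:{ split; unfold Rabs in Hh; destruct Rcase_abs in Hh; lra. }
    specialize (Hy (c + h0)).
    replace (c + h0 - c) with h0 in Hy by ring.
    apply Hy; auto.
    - apply (HI a b); auto; unfold Rabs in Hh; destruct Rcase_abs in Hh; lra.
    - lra.
    - lra. }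
  assert (pr1 : forall c, a < c < b -> derivable_pt H c).
  { intros c Hc. exists (phi1 c). apply Hlim; auto. }
  assert (pr2 : forall c, a < c < b -> derivable_pt id c).
  { intros c Hc. exists 1. apply derivable_pt_lim_id. }
  assert (Hc1 : forall c, a <= c <= b -> continuity_pt H c).
  { intros c Hc eps Heps.
    destruct (deriv_cont _ _ _ _ (Hd c Hc) eps Heps) as [d [Hdp Hy]].
    exists d; split; auto. intros x0 [_ Hx0]. simpl in *. unfold R_dist in *.
    unfold H. rewrite (clamp_id a b c) by lra.
    apply Hy.
    - destruct (clamp_in a b x0) as [u v]; [lra|]. apply (HI a b); auto.
    - eapply Rle_lt_trans; [apply clamp_lip; lra| exact Hx0]. }
  assert (Hc2 : forall c, a <= c <= b -> continuity_pt id c).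
  { intros; apply derivable_continuous_pt. exists 1. apply derivable_pt_lim_id. }
  destruct (MVT H id a b pr1 pr2 Hab Hc1 Hc2) as [xi [P E]].
  exists xi; split; auto.
  rewrite (derive_pt_eq_0 _ _ _ _ (Hlim xi P)) in E.
  rewrite (derive_pt_eq_0 _ _ _ _ (derivable_pt_lim_id xi)) in E.
  unfold H, id in E. rewrite !clamp_id in E by lra. lra.
Qed.
Lemma tangent_gap I h h1 h2 lo hi c y :
  is_interval I ->
  (forall t, I t -> deriv_within I h t (h1 t) /\ deriv_within I h1 t (h2 t)) ->
  I lo -> I hi -> lo <= c <= hi -> lo <= y <= hi -> y <> c ->
  exists eta k, lo <= eta <= hi /\ 0 < k /\ h y - h c - h1 c * (y - c) = h2 eta * k.
Proof.
  intros HI Hd Ilo Ihi Hc Hy Hne.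
  assert (II : forall t, lo <= t <= hi -> I t) by (intros t Ht; apply (HI lo hi); tauto).
  destruct (Rlt_or_le c y) as [Hlt|Hle].
  - destruct (MVT_I I h h1 c y HI (II c Hc) (II y Hy) Hlt) as [xi [Hxi E1]].
    { intros t Ht; apply Hd, II; lra. }
    destruct (MVT_I I h1 h2 c xi HI (II c Hc) (II xi ltac:(lra)) ltac:(lra)) as [eta [Heta E2]].
    { intros t Ht; apply Hd, II; lra. }
    exists eta, ((xi - c) * (y - c)); repeat split; try lra.
    + apply Rmult_lt_0_compat; lra.
    + rewrite E1. replace (h1 xi * (y - c) - h1 c * (y - c)) with ((h1 xi - h1 c) * (y - c)) by ring.
      rewrite E2. ring.
  - assert (Hlt : y < c) by lra.
    destruct (MVT_I I h h1 y c HI (II y Hy) (II c Hc) Hlt) as [xi [Hxi E1]].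
    { intros t Ht; apply Hd, II; lra. }
    destruct (MVT_I I h1 h2 xi c HI (II xi ltac:(lra)) (II c Hc) ltac:(lra)) as [eta [Heta E2]].
    { intros t Ht; apply Hd, II; lra. }
    exists eta, ((c - xi) * (c - y)); repeat split; try lra.
    + apply Rmult_lt_0_compat; lra.
    + replace (h y - h c - h1 c * (y - c)) with ((h1 c - h1 xi) * (c - y) - (h c - h y - h1 xi * (c - y))) by ring.
      rewrite E1, E2. ring.
Qed.

Lemma sumR_ext n a b : (forall i, (i < n)%nat -> a i = b i) -> sumR n a = sumR n b.
Proof. induction n; simpl; intros H; auto. rewrite IHn by (intros; apply H; lia). rewrite H by lia. auto. Qed.

Lemma sumR_lin n a b al be : sumR n (fun i => al * a i + be * b i) = al * sumR n a + be * sumR n b.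
Proof. induction n; simpl; [ring|]. rewrite IHn. ring. Qed.

Lemma sumR_le n a b : (forall i, (i < n)%nat -> a i <= b i) -> sumR n a <= sumR n b.
Proof. induction n; simpl; intros H; [lra|]. assert (H1 := H n ltac:(lia)).
  assert (sumR n a <= sumR n b) by (apply IHn; intros; apply H; lia). lra. Qed.

Lemma sumR_lt n a b j : (j < n)%nat -> a j < b j -> (forall i, (i < n)%nat -> a i <= b i) -> sumR n a < sumR n b.
Proof. induction n; simpl; intros Hj Hab H; [lia|].
  destruct (Nat.eq_dec j n) as [->|Hne].
  - assert (sumR n a <= sumR n b) by (apply sumR_le; intros; apply H; lia). lra.
  - assert (sumR n a < sumR n b) by (apply IHn; [lia|auto| intros; apply H; lia]).
    assert (H1 := H n ltac:(lia)). lra.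
Qed.

Lemma wavg_bounds n p x lo hi : (forall i, (i < n)%nat -> 0 < p i) -> sumR n p = 1 ->
  (forall i, (i < n)%nat -> lo <= x i <= hi) -> lo <= sumR n (fun i => p i * x i) <= hi.
Proof.
  intros Hp Hs Hx. split.
  - replace lo with (sumR n (fun i => p i * lo)).
    + apply sumR_le. intros i Hi. apply Rmult_le_compat_l. left; auto. apply Hx; auto.
    +       replace (fun i => p i * lo) with (fun i => lo * p i + 0 * p i) by (apply functional_extensionality; intros; ring).
      rewrite sumR_lin, Hs. ring.
  - replace hi with (sumR n (fun i => p i * hi)).
    + apply sumR_le. intros i Hi. apply Rmult_le_compat_l. left; auto. apply Hx; auto.
    +       replace (fun i => p i * hi) with (fun i => hi * p i + 0 * p i) by (apply functional_extensionality; intros; ring).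
      rewrite sumR_lin, Hs. ring.
Qed.

Lemma jensen_gen I h h1 h2 n p x lo hi :
  is_interval I ->
  (forall t, I t -> deriv_within I h t (h1 t) /\ deriv_within I h1 t (h2 t)) ->
  I lo -> I hi ->
  (forall i, (i < n)%nat -> 0 < p i) -> sumR n p = 1 ->
  (forall i, (i < n)%nat -> lo <= x i <= hi) ->
  (forall t, lo <= t <= hi -> 0 <= h2 t) ->
  0 <= jensen h n p x /\
  ((forall t, lo <= t <= hi -> 0 < h2 t) ->
   (exists i j, (i < n)%nat /\ (j < n)%nat /\ x i <> x j) -> 0 < jensen h n p x).
Proof.
  intros HI Hd Ilo Ihi Hp Hs Hx H2.
  set (c := sumR n (fun i => p i * x i)).
  assert (Hc : lo <= c <= hi) by (apply wavg_bounds; auto).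
  assert (Htan : forall i, (i < n)%nat -> p i * (h c + h1 c * (x i - c)) <= p i * h (x i)).
  { intros i Hi. apply Rmult_le_compat_l. left; auto.
    destruct (Req_dec (x i) c) as [E|E]. { rewrite E; lra. }
    destruct (tangent_gap I h h1 h2 lo hi c (x i) HI Hd Ilo Ihi Hc (Hx i Hi) E) as [eta [k [He [Hk Eq]]]].
    assert (0 <= h2 eta) by auto. nra. }
  assert (Hsum : sumR n (fun i => p i * (h c + h1 c * (x i - c))) = h c).
  { replace (fun i => p i * (h c + h1 c * (x i - c))) with
      (fun i => (h c - h1 c * c) * p i + h1 c * (p i * x i)) by (apply functional_extensionality; intros; ring).
    rewrite sumR_lin, Hs. fold c. ring. }
  unfold jensen. fold c. split.
  - assert (H := sumR_le n _ _ Htan). lra.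
  - intros H2s [i [j [Hi [Hj Hij]]]].
    assert (exists k, (k < n)%nat /\ x k <> c) as [k [Hk Hkc]].
    { destruct (Req_dec (x i) c); [exists j; split; auto; congruence | exists i; auto]. }
    assert (Hlt : p k * (h c + h1 c * (x k - c)) < p k * h (x k)).
    { apply Rmult_lt_compat_l; auto.
      destruct (tangent_gap I h h1 h2 lo hi c (x k) HI Hd Ilo Ihi Hc (Hx k Hk) Hkc) as [eta [kk [He [Hkk Eq]]]].
      assert (0 < h2 eta) by auto. nra. }
    assert (H := sumR_lt n _ _ k Hk Hlt Htan). lra.
Qed.

Lemma jensen_comb h1 h2 al be n p x :
  jensen (fun y => al * h1 y + be * h2 y) n p x = al * jensen h1 n p x + be * jensen h2 n p x.
Proof.
  unfold jensen.
  replace (fun i => p i * (al * h1 (x i) + be * h2 (x i))) with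
    (fun i => al * (p i * h1 (x i)) + be * (p i * h2 (x i))) by (apply functional_extensionality; intros; ring).
  rewrite sumR_lin. ring.
Qed.
Lemma cont2 I u v t0 : cont_within I u t0 -> cont_within I v t0 -> 0 < u t0 + t0 * v t0 ->
  exists d, 0 < d /\ forall s b, I s -> Rabs (s - t0) < d -> Rabs (b - t0) < d -> 0 < u s + b * v s.
Proof.
  intros Hu Hv HD. set (D := u t0 + t0 * v t0) in *.
  assert (Pt : 0 < Rabs t0 + 1) by (pose proof (Rabs_pos t0); lra).
  assert (Pv : 0 < Rabs (v t0) + 1) by (pose proof (Rabs_pos (v t0)); lra).
  destruct (Hu (D/3)) as [d1 [Hd1 H1]]. lra.
  destruct (Hv (D/(3*(Rabs t0 + 1)))) as [d2 [Hd2 H2]]. { apply Rdiv_lt_0_compat; lra. }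
  set (e3 := D/(3*(Rabs (v t0) + 1))).
  assert (He3 : 0 < e3) by (apply Rdiv_lt_0_compat; lra).
  exists (Rmin (Rmin d1 d2) (Rmin 1 e3)). split. { repeat apply Rmin_pos; lra. }
  intros s b Is Hs Hb.
  assert (m1 := Rmin_l (Rmin d1 d2) (Rmin 1 e3)). assert (m2 := Rmin_r (Rmin d1 d2) (Rmin 1 e3)).
  assert (m3 := Rmin_l d1 d2). assert (m4 := Rmin_r d1 d2). assert (m5 := Rmin_l 1 e3). assert (m6 := Rmin_r 1 e3).
  assert (A1 := H1 s Is ltac:(lra)). assert (A2 := H2 s Is ltac:(lra)).
  assert (Hbabs : Rabs b <= Rabs t0 + 1).
  { replace b with ((b - t0) + t0) by ring. eapply Rle_trans. apply Rabs_triang. lra. }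
  assert (T2 : Rabs (b * (v s - v t0)) < D/3).
  { rewrite Rabs_mult.
    apply Rle_lt_trans with ((Rabs t0 + 1) * Rabs (v s - v t0)).
    { apply Rmult_le_compat_r; auto. apply Rabs_pos. }
    apply Rlt_le_trans with ((Rabs t0 + 1) * (D / (3 * (Rabs t0 + 1)))).
    { apply Rmult_lt_compat_l; auto. }
    right; field; lra. }
  assert (T3 : Rabs ((b - t0) * v t0) < D/3).
  { rewrite Rabs_mult.
    apply Rle_lt_trans with (e3 * Rabs (v t0)).
    { apply Rmult_le_compat_r. apply Rabs_pos. lra. }
    apply Rlt_le_trans with (e3 * (Rabs (v t0) + 1)). { apply Rmult_lt_compat_l; lra. }
    right; unfold e3; field; lra. }
  apply Rabs_def2 in A1. apply Rabs_def2 in T2. apply Rabs_def2 in T3.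
  replace (u s + b * v s) with (D + (u s - u t0) + b * (v s - v t0) + (b - t0) * v t0) by (unfold D; ring).
  lra.
Qed.

Lemma cont_opp I u t : cont_within I u t -> cont_within I (fun y => - u y) t.
Proof. intros H eps He. destruct (H eps He) as [d [Hd Hy]]. exists d; split; auto.
  intros y Iy Hyt. replace (- u y - - u t) with (- (u y - u t)) by ring. rewrite Rabs_Ropp. auto. Qed.

Lemma min_aux_spec k x : (forall i, (i <= k)%nat -> min_aux k x <= x i) /\ exists i, (i <= k)%nat /\ min_aux k x = x i.
Proof. induction k as [|k [IH1 [j [Hj Ej]]]]; simpl.
  - split. intros i Hi; replace i with 0%nat by lia; lra. exists 0%nat; split; auto.
  - split.
    + intros i Hi. destruct (Nat.eq_dec i (S k)) as [->|Hne]. apply Rmin_r.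
      eapply Rle_trans. apply Rmin_l. apply IH1; lia.
    + unfold Rmin; destruct Rle_dec. exists j; split; auto. exists (S k); auto.
Qed.

Lemma max_aux_spec k x : (forall i, (i <= k)%nat -> x i <= max_aux k x) /\ exists i, (i <= k)%nat /\ max_aux k x = x i.
Proof. induction k as [|k [IH1 [j [Hj Ej]]]]; simpl.
  - split. intros i Hi; replace i with 0%nat by lia; lra. exists 0%nat; split; auto.
  - split.
    + intros i Hi. destruct (Nat.eq_dec i (S k)) as [->|Hne]. apply Rmax_r.
      eapply Rle_trans. apply IH1; lia. apply Rmax_l.
    + unfold Rmax; destruct Rle_dec. exists (S k); auto. exists j; split; auto.
Qed.
Lemma comb_d I f f1 f2 g g1 g2 al be : C2_on I f f1 f2 -> C2_on I g g1 g2 ->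
  forall t, I t -> deriv_within I (fun y => al * f y + be * g y) t (al * f1 t + be * g1 t) /\
    deriv_within I (fun y => al * f1 y + be * g1 y) t (al * f2 t + be * g2 t).
Proof. intros Hf Hg t It. destruct (Hf t It) as [a1 [a2 _]]. destruct (Hg t It) as [b1 [b2 _]].
  split; apply deriv_comb; auto. Qed.

Lemma C2_d I f f1 f2 : C2_on I f f1 f2 -> forall t, I t -> deriv_within I f t (f1 t) /\ deriv_within I f1 t (f2 t).
Proof. intros H t It; destruct (H t It) as [a [b _]]; auto. Qed.

Lemma pick I t0 d : is_interval I -> (exists a b, I a /\ I b /\ a < b) -> I t0 -> 0 < d ->
  exists a' b', a' < b' /\ I a' /\ I b' /\ Rabs (a' - t0) < d /\ Rabs (b' - t0) < d.
Proof.
  intros HI [a [b [Ia [Ib Hab]]]] It Hd.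
  destruct (Rlt_or_le t0 b) as [Hl|Hl].
  - exists t0, (Rmin b (t0 + d/2)).
    assert (m1 := Rmin_l b (t0 + d/2)). assert (m2 := Rmin_r b (t0 + d/2)).
    assert (t0 < Rmin b (t0 + d/2)) by (unfold Rmin; destruct Rle_dec; lra).
    repeat split; auto.
    + apply (HI t0 b); auto; lra.
    + rewrite Rminus_diag, Rabs_R0; lra.
    + rewrite Rabs_right; lra.
  - exists (Rmax a (t0 - d/2)), t0.
    assert (m1 := Rmax_l a (t0 - d/2)). assert (m2 := Rmax_r a (t0 - d/2)).
    assert (Rmax a (t0 - d/2) < t0) by (unfold Rmax; destruct Rle_dec; lra).
    repeat split; auto.
    + apply (HI a t0); auto; lra.
    + rewrite Rabs_left; lra.
    + rewrite Rminus_diag, Rabs_R0; lra.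
Qed.

Lemma between_close a b t0 d s : Rabs (a - t0) < d -> Rabs (b - t0) < d -> a <= s <= b -> Rabs (s - t0) < d.
Proof. intros Ha Hb Hs. apply Rabs_def2 in Ha. apply Rabs_def2 in Hb. apply Rabs_def1; lra. Qed.

Theorem theorem2 (I : R -> Prop) (f f1 f2 g g1 g2 : R -> R)
  (HI : is_interval I) (HInd : exists a b, I a /\ I b /\ a < b)
  (Hf : C2_on I f f1 f2) (Hg : C2_on I g g1 g2)
  (Hg2 : forall t, I t -> 0 < g2 t) :
  (forall (n : nat) (p x : nat -> R),
      (2 <= n)%nat ->
      (forall i, (i < n)%nat -> 0 < p i) ->
      sumR n p = 1 ->
      (forall i, (i < n)%nat -> I (x i)) ->
      (exists i j, (i < n)%nat /\ (j < n)%nat /\ x i <> x j) ->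
      minR n x <= Lambda f g n p x <= maxR n x)
  <-> (forall t, I t -> f2 t = t * g2 t).
Proof.
  split.
  - intros H t0 It0.
    destruct (Rtotal_order (f2 t0) (t0 * g2 t0)) as [Hlt|[Heq|Hgt]]; auto; exfalso.
    + destruct (cont2 I (fun y => - f2 y) g2 t0) as [d [Hd Hc]].
      { apply cont_opp. apply (Hf t0 It0). }
      { apply (Hg t0 It0). }
      { lra. }
      destruct (pick I t0 d HI HInd It0 Hd) as [a [b [Hab [Ia [Ib [Ha Hb]]]]]].
      set (x2 := fun i : nat => match i with O => a | _ => b end).
      set (p2 := fun _ : nat => / 2).
      assert (Hx : forall i, (i < 2)%nat -> a <= x2 i <= b).
      { intros [|i] _; simpl; lra. }
      assert (Hp : forall i, (i < 2)%nat -> 0 < p2 i) by (intros; unfold p2; lra).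
      assert (Hs : sumR 2 p2 = 1) by (simpl; unfold p2; lra).
      assert (Hne : exists i j, (i < 2)%nat /\ (j < 2)%nat /\ x2 i <> x2 j).
      { exists 0%nat, 1%nat; simpl; repeat split; try lia; lra. }
      destruct (jensen_gen I g g1 g2 2 p2 x2 a b HI (C2_d _ _ _ _ Hg) Ia Ib Hp Hs Hx) as [_ Jg].
      { intros t Ht. left. apply Hg2, (HI a b); tauto. }
      specialize (Jg ltac:(intros t Ht; apply Hg2, (HI a b); tauto) Hne).
      destruct (jensen_gen I _ _ _ 2 p2 x2 a b HI (comb_d I f f1 f2 g g1 g2 (-1) a Hf Hg) Ia Ib Hp Hs Hx) as [_ Jh].
      { intros t Ht. assert (0 < - f2 t + a * g2 t) by (apply Hc; [apply (HI a b); tauto| apply (between_close a b t0 d); auto|auto]). lra. }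
      specialize (Jh ltac:(intros t Ht; assert (0 < - f2 t + a * g2 t) by (apply Hc; [apply (HI a b); tauto| apply (between_close a b t0 d); auto|auto]); lra) Hne).
      rewrite jensen_comb in Jh.
      destruct (H 2%nat p2 x2 ltac:(lia) Hp Hs ltac:(intros i Hi; apply (HI a b); auto; apply Hx; auto) Hne) as [L _].
      unfold minR in L. simpl in L. unfold Rmin in L. destruct Rle_dec; [|lra].
      unfold Lambda in L.
      assert (L2 : a * jensen g 2 p2 x2 <= jensen f 2 p2 x2).
      { apply (Rmult_le_compat_r (jensen g 2 p2 x2)) in L; [|lra].
        unfold Rdiv in L. rewrite Rmult_assoc, Rinv_l in L by lra. lra. }
      lra.
    + destruct (cont2 I f2 (fun y => - g2 y) t0) as [d [Hd Hc]].
      { apply (Hf t0 It0). }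
      { apply cont_opp. apply (Hg t0 It0). }
      { lra. }
      destruct (pick I t0 d HI HInd It0 Hd) as [a [b [Hab [Ia [Ib [Ha Hb]]]]]].
      set (x2 := fun i : nat => match i with O => a | _ => b end).
      set (p2 := fun _ : nat => / 2).
      assert (Hx : forall i, (i < 2)%nat -> a <= x2 i <= b).
      { intros [|i] _; simpl; lra. }
      assert (Hp : forall i, (i < 2)%nat -> 0 < p2 i) by (intros; unfold p2; lra).
      assert (Hs : sumR 2 p2 = 1) by (simpl; unfold p2; lra).
      assert (Hne : exists i j, (i < 2)%nat /\ (j < 2)%nat /\ x2 i <> x2 j).
      { exists 0%nat, 1%nat; simpl; repeat split; try lia; lra. }
      destruct (jensen_gen I g g1 g2 2 p2 x2 a b HI (C2_d _ _ _ _ Hg) Ia Ib Hp Hs Hx) as [_ Jg].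
      { intros t Ht. left. apply Hg2, (HI a b); tauto. }
      specialize (Jg ltac:(intros t Ht; apply Hg2, (HI a b); tauto) Hne).
      destruct (jensen_gen I _ _ _ 2 p2 x2 a b HI (comb_d I f f1 f2 g g1 g2 1 (-b) Hf Hg) Ia Ib Hp Hs Hx) as [_ Jh].
      { intros t Ht. assert (0 < f2 t + b * - g2 t) by (apply Hc; [apply (HI a b); tauto| apply (between_close a b t0 d); auto|auto]). lra. }
      specialize (Jh ltac:(intros t Ht; assert (0 < f2 t + b * - g2 t) by (apply Hc; [apply (HI a b); tauto| apply (between_close a b t0 d); auto|auto]); lra) Hne).
      rewrite jensen_comb in Jh.
      destruct (H 2%nat p2 x2 ltac:(lia) Hp Hs ltac:(intros i Hi; apply (HI a b); auto; apply Hx; auto) Hne) as [_ L].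
      unfold maxR in L. simpl in L. unfold Rmax in L. destruct Rle_dec; [|lra].
      unfold Lambda in L.
      assert (L2 : jensen f 2 p2 x2 <= b * jensen g 2 p2 x2).
      { apply (Rmult_le_compat_r (jensen g 2 p2 x2)) in L; [|lra].
        unfold Rdiv in L. rewrite Rmult_assoc, Rinv_l in L by lra. lra. }
      lra.
  - intros Hfg n p x Hn Hp Hs Hx Hne.
    destruct (min_aux_spec (n - 1) x) as [Mi1 [jm [Hjm Ejm]]].
    destruct (max_aux_spec (n - 1) x) as [Ma1 [jM [HjM EjM]]].
    fold (minR n x) in Mi1, Ejm. fold (maxR n x) in Ma1, EjM.
    set (m := minR n x) in *. set (M := maxR n x) in *.
    assert (Hb : forall i, (i < n)%nat -> m <= x i <= M) by (intros; split; [apply Mi1|apply Ma1]; lia).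
    assert (Im : I m) by (rewrite Ejm; apply Hx; lia).
    assert (IM : I M) by (rewrite EjM; apply Hx; lia).
    assert (IS : forall t, m <= t <= M -> I t) by (intros t Ht; apply (HI m M); tauto).
    destruct (jensen_gen I g g1 g2 n p x m M HI (C2_d _ _ _ _ Hg) Im IM Hp Hs Hb) as [_ Jg].
    { intros t Ht. left. apply Hg2, IS; auto. }
    specialize (Jg ltac:(intros t Ht; apply Hg2, IS; auto) Hne).
    destruct (jensen_gen I _ _ _ n p x m M HI (comb_d I f f1 f2 g g1 g2 1 (-m) Hf Hg) Im IM Hp Hs Hb) as [J1 _].
    { intros t Ht. rewrite Hfg by (apply IS; auto). assert (0 < g2 t) by (apply Hg2, IS; auto). nra. }
    destruct (jensen_gen I _ _ _ n p x m M HI (comb_d I f f1 f2 g g1 g2 (-1) M Hf Hg) Im IM Hp Hs Hb) as [J2 _].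
    { intros t Ht. rewrite Hfg by (apply IS; auto). assert (0 < g2 t) by (apply Hg2, IS; auto). nra. }
    rewrite jensen_comb in J1, J2.
    unfold Lambda. split.
    + apply (Rmult_le_reg_r (jensen g n p x)); auto. unfold Rdiv. rewrite Rmult_assoc, Rinv_l by lra. lra.
    + apply (Rmult_le_reg_r (jensen g n p x)); auto. unfold Rdiv. rewrite Rmult_assoc, Rinv_l by lra. lra.
Qed.
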